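(* Let $u(x)=\sum_\alpha u_\alpha(x)\mathfrak{N}_\alpha$ with real-valued $u_\alpha\in L_2(U,\mu)$, only finitely many nonzero, and let $v=\sum_\alpha v_\alpha\mathfrak{N}_\alpha$ with real $v_\alpha$, only finitely many nonzero. Then $$\mathbf{E}[\delta(u)v]=\mathbf{E}\Big[\int_U u(x)\mathbb{D}v(x)d\mu\Big].$$
   Context: Setting: $(U,\mathcal{U},\mu)$ $\sigma$-finite complete measure space, $\{m_k\}$ a complete orthonormal system of $L_2(U,\mu)$; $\mathfrak{N}:L_2(U,\mu)\to L_2(\Omega,\mathbf{P})$ mean-zero linear isometry, $\xi_k=\mathfrak{N}(m_k)$. $J$: finitely supported multi-indices of nonnegative integers, $\alpha!=\prod\alpha_k!$, $\varepsilon_k$ unit multi-indices; $\{\mathfrak{N}_\alpha\}$ an orthogonal family in $L_2(\Omega)$ with $\mathbf{E}\mathfrak{N}_\alpha^2=\alpha!$, obtained by degreewise orthogonalization of monomials $\prod\xi_k^{\alpha_k}$. Skorokhod integral: $\delta(u)=\sum_\alpha\sum_k(\int_U u_\alpha m_kd\mu)\mathfrak{N}_{\alpha+\varepsilon_k}$. Malliavin derivative: $\mathbb{D}v(x)=\sum_\alpha\sum_k(\alpha_k+1)v_{\alpha+\varepsilon_k}m_k(x)\mathfrak{N}_\alpha$. *)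

(* Defs.v *)
From HB Require Import structures.
From mathcomp Require Import all_boot all_order all_algebra finmap.
From mathcomp Require Import all_classical all_reals all_analysis.
Set Implicit Arguments. Unset Strict Implicit. Unset Printing Implicit Defensive.
Import Order.TTheory GRing.Theory Num.Theory.
Local Open Scope classical_set_scope.
Local Open Scope ring_scope.

Definition mindex := {fsfun nat -> nat with 0%N}.

Definition meps (a : mindex) (k : nat) : mindex := [fsfun a with k |-> (a k).+1].

Definition mfact (a : mindex) : nat := (\prod_(k <- finsupp a) (a k)`!)%N.

Definition square_integrable d (T : measurableType d) (R : realType)
  (mu : {measure set T -> \bar R}) (f : T -> R) : Prop :=
  measurable_fun setT f /\ (\int[mu]_x ((f x) ^+ 2)%:E < +oo)%E.

Definition orthonormal_system d (T : measurableType d) (R : realType)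
  (mu : {measure set T -> \bar R}) (m : nat -> T -> R) : Prop :=
  (forall k, square_integrable mu (m k)) /\
  (forall j k, (\int[mu]_x (m j x * m k x)%:E = (if j == k then 1 else 0)%:E)%E).

Definition complete_system d (T : measurableType d) (R : realType)
  (mu : {measure set T -> \bar R}) (m : nat -> T -> R) : Prop :=
  forall f, square_integrable mu f ->
    (forall k, (\int[mu]_x (f x * m k x)%:E = 0)%E) -> {ae mu, forall x, f x = 0}.

Definition chaos_family d (Omega : measurableType d) (R : realType)
  (P : probability Omega R) (N : mindex -> Omega -> R) : Prop :=
  (forall a, measurable_fun setT (N a)) /\
  (forall a b, a != b -> (\int[P]_w (N a w * N b w)%:E = 0)%E) /\
  (forall a, (\int[P]_w ((N a w) ^+ 2)%:E = ((mfact a)%:R)%:E)%E).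

(* Partial sums (k < n) of the Skorokhod series
   delta(u) = sum_alpha sum_k (int_U u_alpha m_k dmu) N_(alpha+eps_k),
   where u_alpha = 0 for alpha outside the finite list S. *)
Definition skorokhod_partial dU (U : measurableType dU) dO (Omega : measurableType dO)
  (R : realType) (mu : {measure set U -> \bar R}) (m : nat -> U -> R)
  (N : mindex -> Omega -> R) (S : seq mindex) (u : mindex -> U -> R)
  (n : nat) (w : Omega) : R :=
  \sum_(a <- S) \sum_(k < n) (Rintegral mu setT (fun x => u a x * m k x)) * N (meps a k) w.

Definition is_skorokhod_integral dU (U : measurableType dU) dO (Omega : measurableType dO)
  (R : realType) (mu : {measure set U -> \bar R}) (P : probability Omega R)
  (m : nat -> U -> R) (N : mindex -> Omega -> R) (S : seq mindex)
  (u : mindex -> U -> R) (D : Omega -> R) : Prop :=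
  measurable_fun setT D /\
  ((fun n => (\int[P]_w ((D w - skorokhod_partial mu m N S u n w) ^+ 2)%:E)%E)
     @ \oo --> 0%E).

(* Malliavin derivative Dv(x) = sum_alpha sum_k (alpha_k+1) v_(alpha+eps_k) m_k(x) N_alpha
   (finitely many nonzero terms when v has finite support) *)
Definition malliavin_deriv dU (U : measurableType dU) dO (Omega : measurableType dO)
  (R : realType) (m : nat -> U -> R) (N : mindex -> Omega -> R) (v : mindex -> R)
  (x : U) (w : Omega) : R :=
  \sum_(a \in [set: mindex]) \sum_(k \in [set: nat])
     ((a k).+1%:R * v (meps a k) * m k x * N a w).

(* Main.v *)
Require Import Defs.
From HB Require Import structures.
From mathcomp Require Import all_boot all_order all_algebra finmap.
From mathcomp Require Import all_classical all_reals all_analysis.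
From mathcomp Require Import measurable_realfun lebesgue_integral.
From mathcomp Require Import lra ring.
Import numFieldNormedType.Exports.
Import Order.TTheory GRing.Theory Num.Theory.
Local Open Scope classical_set_scope.
Local Open Scope ring_scope.
Section L2.
Context d (T : measurableType d) (R : realType) (mu : {measure set T -> \bar R}).
Definition iR (f : T -> R) := mu.-integrable setT (EFin \o f).

Lemma iR_sq f : square_integrable mu f -> iR (fun x => f x ^+ 2).
Proof.
case=> mf fi; apply/integrableP; split.
  apply/measurable_EFinP; under eq_fun do rewrite expr2; exact: measurable_funM.
rewrite (eq_integral (fun x => (f x ^+ 2)%:E))// => x _.
by rewrite /= ger0_norm// sqr_ge0.
Qed.

Lemma iR_prod f g : square_integrable mu f -> square_integrable mu g ->
  iR (fun x => f x * g x).
Proof.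
move=> sf sg; have [mf _] := sf; have [mg _] := sg.
have H1 := integrableD measurableT (iR_sq _ sf) (iR_sq _ sg).
rewrite /iR; apply: (le_integrable measurableT _ _ H1).
  by apply/measurable_EFinP; exact: measurable_funM.
move=> x _ /=; rewrite lee_fin.
rewrite [X in _ <= X]ger0_norm ?addr_ge0 ?sqr_ge0//.
rewrite ler_norml; apply/andP; split; nra.
Qed.

Lemma iR_sum I (s : seq I) (F : I -> T -> R) : (forall i, iR (F i)) ->
  iR (fun x => \sum_(i <- s) F i x).
Proof.
move=> Fi; elim: s => [|i s ih].
  apply: eq_integrable (integrable0 _ _) => //= x _; by rewrite big_nil.
apply: eq_integrable (integrableD measurableT (Fi i) ih) => //= x _.
by rewrite big_cons EFinD.
Qed.

Lemma Rint_sum I (s : seq I) (F : I -> T -> R) : (forall i, iR (F i)) ->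
  Rintegral mu setT (fun x => \sum_(i <- s) F i x) =
  \sum_(i <- s) Rintegral mu setT (F i).
Proof.
move=> Fi; elim: s => [|i s ih].
  rewrite big_nil; under eq_Rintegral do rewrite big_nil.
  by rewrite Rintegral_cst// mul0r.
rewrite big_cons -ih -RintegralD//; last exact: iR_sum.
by apply: eq_Rintegral => x _; rewrite big_cons.
exact: Fi.
Qed.

Lemma iR_scale k f : iR f -> iR (fun x => k * f x).
Proof.
move=> fi; apply: eq_integrable (integrableZl measurableT k fi) => //= x _.
Qed.

Lemma int_EFin f : iR f -> (\int[mu]_x (f x)%:E)%E = (Rintegral mu setT f)%:E.
Proof. by move=> fi; rewrite /Rintegral fineK// (integrable_fin_num _ fi). Qed.

End L2.
Arguments iR {d T R} mu f.
Arguments iR_sq {d T R mu f}.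
Arguments iR_prod {d T R mu f g}.
Arguments iR_sum {d T R mu I} s {F}.
Arguments Rint_sum {d T R mu I} s {F}.
Arguments iR_scale {d T R mu} k {f}.
Arguments int_EFin {d T R mu f}.

Lemma mepsE (a : mindex) k j : meps a k j = if j == k then (a k).+1 else a j.
Proof. by rewrite /meps fsfun_withE. Qed.

Lemma mfact_seq (a : mindex) (s : seq nat) : uniq s ->
  {subset finsupp a <= s} -> mfact a = (\prod_(j <- s) (a j)`!)%N.
Proof.
move=> us sub; rewrite /mfact [RHS](bigID (mem (finsupp a))) /=.
rewrite [X in (_ * X)%N]big1 ?muln1; last first.
  by move=> j /negbTE jn; rewrite fsfun_dflt ?jn.
rewrite -[RHS]big_filter; apply: perm_big.
apply: uniq_perm; [exact: fset_uniq | exact: filter_uniq|].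
by move=> j; rewrite mem_filter; case: (boolP (j \in finsupp a)) => // /sub ->.
Qed.

Lemma mfact_meps (a : mindex) k : mfact (meps a k) = ((a k).+1 * mfact a)%N.
Proof.
set s := undup (k :: finsupp a).
have us : uniq s by exact: undup_uniq.
have ks : k \in s by rewrite mem_undup mem_head.
rewrite (@mfact_seq a s us); last by move=> j js; rewrite mem_undup in_cons js orbT.
rewrite (@mfact_seq (meps a k) s us); last first.
  move=> j; rewrite mem_finsupp mepsE mem_undup in_cons.
  by have [->|jk] := eqVneq j k; rewrite //= mem_finsupp.
rewrite !(big_rem k ks) /= mepsE eqxx factS mulnA; congr (_ * _)%N.
apply: eq_big_seq => j; rewrite mem_rem_uniq // inE => /andP[jk _].
by rewrite mepsE (negbTE jk).
Qed.

Definition dec (b : mindex) k : mindex := [fsfun b with k |-> (b k).-1].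

Lemma dec_meps a k : dec (meps a k) k = a.
Proof.
apply/fsfunP => j; rewrite /dec fsfun_withE !mepsE.
by case: eqP => [->|]; rewrite ?eqxx.
Qed.

Lemma fsum_list (R : realType) (T : choiceType) (f : T -> R) (r : seq T) :
  uniq r -> (forall i, i \notin r -> f i = 0) ->
  \sum_(i \in [set: T]) f i = \sum_(i <- r) f i.
Proof.
move=> ur f0; rewrite fsbig_supp; apply: fsbig_fwiden => //.
  move=> i [_ /= fi]; case: (boolP (i \in r)) => // /f0 fi0; by exfalso; apply: fi.
move=> i [_ /= H]; apply: contrapT => fi; apply: H; split => //.
Qed.

Lemma sum_delta (R : realType) (I : eqType) (s : seq I) (F : I -> R) e :
  uniq s -> \sum_(b <- s) (if e == b then F b else 0) = if e \in s then F e else 0.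
Proof.
move=> us; case: ifPn => es.
  rewrite (big_rem e es) /= eqxx big1_seq ?addr0 // => b /andP[_].
  rewrite mem_rem_uniq // inE => /andP[be _]; by rewrite eq_sym (negbTE be).
rewrite big1_seq // => b /andP[_ bs]; case: eqP => // eb; by move: es; rewrite eb bs.
Qed.

Lemma ineq2 (R : realType) (t x y : R) : 0 < t ->
  2 * t * `|x * y| <= t ^+ 2 * x ^+ 2 + y ^+ 2.
Proof.
move=> t0; have [h|h] := leP 0 (x * y).
  have := sqr_ge0 (t * x - y); rewrite ger0_norm //; nra.
have := sqr_ge0 (t * x + y); rewrite ltr0_norm //; nra.
Qed.

Theorem proposition8 (R : realType)
  (dO : measure_display) (Omega : measurableType dO) (P : probability Omega R)
  (dU : measure_display) (U : measurableType dU) (mu : {measure set U -> \bar R})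
  (m : nat -> U -> R) (N : mindex -> Omega -> R)
  (S : seq mindex) (u : mindex -> U -> R)
  (Sv : seq mindex) (v : mindex -> R) (D : Omega -> R) :
  sigma_finite setT mu -> measure_is_complete mu ->
  orthonormal_system mu m -> complete_system mu m ->
  chaos_family P N ->
  uniq S -> uniq Sv ->
  (forall a, square_integrable mu (u a)) ->
  (forall a, a \notin S -> u a = (fun _ => 0)) ->
  (forall a, a \notin Sv -> v a = 0) ->
  is_skorokhod_integral mu P m N S u D ->
  (\int[P]_w (D w * (\sum_(a <- Sv) v a * N a w))%:E =
  \int[P]_w (Rintegral mu setT
      (fun x => (\sum_(a <- S) u a x * N a w) * malliavin_deriv m N v x w))%:E)%E.
Proof.
move=> _ _ [msq _] _ [mN [Nort Nsq]] uS uSv usq _ v0 [mD Dcvg].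
set c := fun a k => Rintegral mu setT (fun x => u a x * m k x).
set V := fun w => \sum_(b <- Sv) v b * N b w.
set p := skorokhod_partial mu m N S u.
have sqN a : square_integrable P (N a) by split => //; rewrite Nsq ltry.
have iNN a b : iR P (fun w => N a w * N b w) by exact: iR_prod.
have NN a b : Rintegral P setT (fun w => N a w * N b w) =
    if a == b then (mfact a)%:R else 0.
  case: eqVneq => [<-|ab]; rewrite /Rintegral.
    by under eq_integral do rewrite -expr2; rewrite Nsq.
  by rewrite Nort.
have NVE e : (fun w => N e w * V w) = (fun w => \sum_(b <- Sv) v b * (N e w * N b w)).
  apply/funext => w; rewrite /V big_distrr; apply: eq_bigr => b _ /=; ring.
have iNV e : iR P (fun w => N e w * V w).
  by rewrite NVE; apply: iR_sum => b; exact: iR_scale.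
have NV e : Rintegral P setT (fun w => N e w * V w) = v e * (mfact e)%:R :> R.
  rewrite NVE Rint_sum; last by move=> b; exact: iR_scale.
  rewrite (eq_bigr (fun b => v b * (if e == b then (mfact e)%:R else 0))); last first.
    by move=> b _; rewrite RintegralZl //; [rewrite NN | exact: iNN].
  under eq_bigr do rewrite (fun_if (fun z => v _ * z)) mulr0.
  rewrite (@sum_delta R _ Sv (fun b => v b * (mfact e)%:R) e uSv).
  by case: ifPn => // /v0 ->; rewrite mul0r.
set K := (\max_(b <- Sv) \max_(j <- finsupp b) j.+1)%N.
have vK a k : (K <= k)%N -> v (meps a k) = 0.
  move=> Kk; case: (boolP (meps a k \in Sv)) => [inS|/v0 //].
  have kin : k \in finsupp (meps a k) by rewrite mem_finsupp mepsE eqxx.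
  have : (k.+1 <= K)%N.
    rewrite /K; apply: (leq_trans _ (leq_bigmax_seq (F := fun b => \max_(j <- finsupp b) j.+1)%N (meps a k) inS isT)).
    exact: (leq_bigmax_seq (F := fun j => j.+1) k kin isT).
  by rewrite ltnNge Kk.
have pE n : (fun w => p n w * V w) =
    (fun w => \sum_(a <- S) \sum_(k < n) c a k * (N (meps a k) w * V w)).
  apply/funext => w; rewrite /p /skorokhod_partial big_distrl; apply: eq_bigr => a _.
  rewrite big_distrl; apply: eq_bigr => k _ /=; rewrite /c; ring.
have ipV n : iR P (fun w => p n w * V w).
  rewrite pE; apply: iR_sum => a; apply: iR_sum => k; exact: iR_scale.
set Lval := \sum_(a <- S) \sum_(k < K) c a k * (v (meps a k) * (mfact (meps a k))%:R).
have RpV n : (K <= n)%N -> Rintegral P setT (fun w => p n w * V w) = Lval.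
  move=> Kn; rewrite pE Rint_sum; last by move=> a; apply: iR_sum => k; exact: iR_scale.
  apply: eq_bigr => a _; rewrite Rint_sum; last by move=> k; exact: iR_scale.
  rewrite (big_ord_widen n (fun k => c a k * (v (meps a k) * (mfact (meps a k))%:R)) Kn).
  rewrite [RHS]big_mkcond /=; apply: eq_bigr => k _.
  rewrite RintegralZl //; last exact: iNV.
  case: (ltnP k K) => [_|/vK vk]; first by congr (_ * _); apply: NV.
  have := NV (meps a k); rewrite vk mul0r => H.
  by apply/eqP; rewrite mulf_eq0; apply/orP; right; apply/eqP; exact: H.
have mV : measurable_fun setT V.
  apply: measurable_sum => b; exact: measurable_funM.
have mp : forall j, measurable_fun setT (p j).
  move=> j.
  apply: measurable_sum => a0; apply: measurable_sum => k0; exact: measurable_funM.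
have VVE : (fun w => V w ^+ 2) = (fun w => \sum_(b <- Sv) v b * (N b w * V w)).
  apply/funext => w; rewrite expr2 {1}/V big_distrl; apply: eq_bigr => b _ /=; ring.
have iVV : iR P (fun w => V w ^+ 2).
  by rewrite VVE; apply: iR_sum => b; exact: iR_scale.
have sqV : square_integrable P V.
  split => //; have := int_EFin iVV; move=> ->; exact: ltry.
set M := Rintegral P setT (fun w => V w ^+ 2).
have M0 : 0 <= M by apply: Rintegral_ge0 => w _; exact: sqr_ge0.
have key n : (K <= n)%N ->
    (\int[P]_w ((D w - p n w) ^+ 2)%:E)%E \is a fin_num ->
    iR P (fun w => D w * V w) /\
    (forall t, 0 < t -> 2 * t * `|Rintegral P setT (fun w => D w * V w) - Lval| <=
      t ^+ 2 * fine (\int[P]_w ((D w - p n w) ^+ 2)%:E)%E + M).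
  move=> Kn fin.
  have sqDp : square_integrable P (fun w => D w - p n w).
    split; first exact: measurable_funB.
    rewrite -ge0_fin_numE //; apply: integral_ge0 => w _; rewrite lee_fin; exact: sqr_ge0.
  have i1 : iR P (fun w => (D w - p n w) * V w) := iR_prod sqDp sqV.
  have eqDV : (fun w => D w * V w) = (fun w => (D w - p n w) * V w + p n w * V w).
    by apply/funext => w; ring.
  have iDV : iR P (fun w => D w * V w).
    rewrite eqDV; apply: eq_integrable (integrableD measurableT i1 (ipV n)) => // w _.
  split => // t t0.
  have RDV : Rintegral P setT (fun w => D w * V w) =
      Rintegral P setT (fun w => (D w - p n w) * V w) + Lval.
    rewrite eqDV RintegralD //; [by rewrite -(RpV n Kn) | exact: ipV].
  rewrite RDV addrK.
  have iabs : iR P (fun w => `|(D w - p n w) * V w|).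
    by apply: eq_integrable (integrable_abse i1) => // w _.
  have ib : iR P (fun w => t ^+ 2 * (D w - p n w) ^+ 2 + V w ^+ 2).
    apply: eq_integrable (integrableD measurableT (iR_scale (t ^+ 2) (iR_sq sqDp)) iVV) => // w _.
  apply: (le_trans (y := 2 * t * Rintegral P setT (fun w => `|(D w - p n w) * V w|))).
    rewrite ler_pM2l ?mulr_gt0 //; exact: le_normr_Rintegral.
  rewrite -RintegralZl //.
  apply: le_trans.
    apply: (le_Rintegral measurableT (iR_scale (2 * t) iabs) ib) => w _.
    exact: ineq2.
  rewrite RintegralD //; last exact: iR_scale (iR_sq sqDp).
  by rewrite RintegralZl //; exact: iR_sq sqDp.
move/fine_cvgP: Dcvg => [fin_ev cv].
have [n0 [Kn0 fin0]] : exists n, (K <= n)%N /\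
    (\int[P]_w ((D w - p n w) ^+ 2)%:E)%E \is a fin_num.
  have ev : \forall n \near \oo, (K <= n)%N /\
      (\int[P]_w ((D w - p n w) ^+ 2)%:E)%E \is a fin_num.
    by near=> n; split; near: n; [exact: nbhs_infty_ge | exact: fin_ev].
  exact: (filter_ex ev).
have [iDV _] := key n0 Kn0 fin0.
have cDV : Rintegral P setT (fun w => D w * V w) = Lval.
  apply/eqP; rewrite -subr_eq0 -normr_eq0; apply: contraT => cn0.
  set eps := `|_| in cn0.
  have eps0 : 0 < eps by rewrite lt_neqAle eq_sym cn0 normr_ge0.
  have epsn0 : eps != 0 by rewrite gt_eqF.
  set t := (M + 1) / eps.
  have t0 : 0 < t by rewrite divr_gt0 // ltr_wpDl.
  have tn0 : t != 0 by rewrite gt_eqF.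
  have teps : t * eps = M + 1 by rewrite /t divfK.
  set dl := eps / t.
  have dl0 : 0 < dl by rewrite divr_gt0.
  have tdl : t * dl = eps by rewrite /dl mulrC divfK.
  have [n [Kn finn En]] : exists n, [/\ (K <= n)%N,
      (\int[P]_w ((D w - p n w) ^+ 2)%:E)%E \is a fin_num &
      fine (\int[P]_w ((D w - p n w) ^+ 2)%:E)%E < dl].
    have ev3 := cvgr_lt _ cv _ dl0.
    have ev : \forall n \near \oo, [/\ (K <= n)%N,
      (\int[P]_w ((D w - p n w) ^+ 2)%:E)%E \is a fin_num &
      fine (\int[P]_w ((D w - p n w) ^+ 2)%:E)%E < dl].
      near=> n; split.
      - by near: n; exact: nbhs_infty_ge.
      - by near: n; exact: fin_ev.
      - by near: n; exact: ev3.
    exact: (filter_ex ev).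
  have [_ /(_ t t0) bnd] := key n Kn finn.
  move: bnd; rewrite -/eps.
  set E := fine _.
  have h1 : t ^+ 2 * E < t ^+ 2 * dl by rewrite ltr_pM2l // exprn_gt0.
  have h2 : t ^+ 2 * dl = t * eps by rewrite expr2 -mulrA tdl.
  move=> bnd.
  have h3 : t ^+ 2 * E + M < t * eps + (M + 1).
    by rewrite -h2; apply: ltr_leD => //; rewrite lerDl.
  have h4 : t * eps + (M + 1) = 2 * t * eps by rewrite -teps; ring.
  by move: h3; rewrite h4 ltNge bnd.
have -> : (\int[P]_w (D w * V w)%:E)%E = (Rintegral P setT (fun w => D w * V w))%:E.
  exact: int_EFin iDV.
rewrite cDV.
set B := undup [seq dec b j | b <- Sv, j <- index_iota 0 K].
have uB : uniq B by exact: undup_uniq.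
have vB a k : (k < K)%N -> a \notin B -> v (meps a k) = 0.
  move=> kK aB; case: (boolP (meps a k \in Sv)) => [inS|/v0 //].
  exfalso; move/negP: aB; apply; rewrite mem_undup -{1}(dec_meps a k).
  by apply: allpairs_f => //; rewrite mem_index_iota.
have mall x w : malliavin_deriv m N v x w =
    \sum_(b <- B) \sum_(k < K) ((b k).+1%:R * v (meps b k) * m k x * N b w).
  rewrite /malliavin_deriv.
  rewrite (eq_fsbigr (fun a : mindex => \sum_(k <- index_iota 0 K)
      ((a k).+1%:R * v (meps a k) * m k x * N a w))); last first.
    move=> a _; apply: fsum_list; first exact: iota_uniq.
    move=> k; rewrite mem_index_iota /= -leqNgt => /vK ->; by rewrite mulr0 !mul0r.
  rewrite (fsum_list _ _ _ _ uB); last first.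
    move=> a aB; apply: big1_seq => k /andP[_]; rewrite mem_index_iota /= => kK.
    by rewrite vB // mulr0 !mul0r.
  by apply: eq_bigr => b _; rewrite big_mkord.
have ium a k : iR mu (fun x => u a x * m k x) by exact: iR_prod.
set G := fun w => \sum_(a <- S) \sum_(b <- B) \sum_(k < K)
    ((b k).+1%:R * v (meps b k) * c a k) * (N a w * N b w).
have rhs w : Rintegral mu setT
    (fun x => (\sum_(a <- S) u a x * N a w) * malliavin_deriv m N v x w) = G w.
  have -> : (fun x => (\sum_(a <- S) u a x * N a w) * malliavin_deriv m N v x w) =
      (fun x => \sum_(a <- S) \sum_(b <- B) \sum_(k < K)
        (N a w * N b w * ((b k).+1%:R * v (meps b k))) * (u a x * m k x)).
    apply/funext => x; rewrite mall big_distrl; apply: eq_bigr => a _.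
    rewrite big_distrr; apply: eq_bigr => b _.
    rewrite big_distrr; apply: eq_bigr => k _ /=; ring.
  rewrite Rint_sum; last first.
    by move=> a; apply: iR_sum => b; apply: iR_sum => k; exact: iR_scale.
  apply: eq_bigr => a _; rewrite Rint_sum; last first.
    by move=> b; apply: iR_sum => k; exact: iR_scale.
  apply: eq_bigr => b _; rewrite Rint_sum; last by move=> k; exact: iR_scale.
  apply: eq_bigr => k _; rewrite RintegralZl //; last exact: ium.
  rewrite /c; ring.
have iG : iR P G.
  by apply: iR_sum => a; apply: iR_sum => b; apply: iR_sum => k; exact: iR_scale.
under eq_integral => w _ do rewrite rhs.
have -> : (\int[P]_w (G w)%:E)%E = (Rintegral P setT G)%:E by exact: int_EFin iG.
congr EFin.
rewrite Rint_sum; last first.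
  by move=> a; apply: iR_sum => b; apply: iR_sum => k; exact: iR_scale.
apply: eq_bigr => a _; rewrite Rint_sum; last first.
  by move=> b; apply: iR_sum => k; exact: iR_scale.
rewrite (eq_bigr (fun b => if a == b then \sum_(k < K)
    (mfact a)%:R * ((a k).+1%:R * v (meps a k) * c a k) else 0)); last first.
  move=> b _; rewrite Rint_sum; last by move=> k; exact: iR_scale.
  case: eqVneq => [<-|ab].
    apply: eq_bigr => k _; rewrite RintegralZl //; last exact: iNN.
    have := NN a a; rewrite eqxx => ->; ring.
  apply: big1 => k _; rewrite RintegralZl //; last exact: iNN.
  have := NN a b; rewrite (negbTE ab) => ->; ring.
rewrite (@sum_delta R _ B (fun _ => \sum_(k < K)
    (mfact a)%:R * ((a k).+1%:R * v (meps a k) * c a k)) a uB).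
case: ifPn => aB.
  apply: eq_bigr => k _; rewrite mfact_meps natrM; ring.
rewrite big1 //; move=> k _; rewrite vB //; ring.
Unshelve. all: by end_near.
Qed.
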